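(* Let $(\mathcal{A},\mu,\alpha)$ be a multiplicative Hom-alternative superalgebra. Then the $n$th derived Hom-superalgebra $\mathcal{A}^{n}=(\mathcal{A},\mu^{(n)}=\alpha^{2^{n}-1}\circ\mu,\alpha^{2^{n}})$ is also a multiplicative Hom-alternative superalgebra for each $n\geq0$.
   Context: $\mathcal{A}=\mathcal{A}_0\oplus\mathcal{A}_1$ is a $\mathbb{Z}_2$-graded vector space over an algebraically closed field $\mathbb{K}$ of characteristic $0$; $|x|$ is the parity of homogeneous $x$; even maps preserve parity. For even bilinear $\mu$ and even linear $\alpha$, $\widetilde{as}(x,y,z)=\mu(\mu(x,y),\alpha(z))-\mu(\alpha(x),\mu(y,z))$. A Hom-alternative superalgebra is a triple $(\mathcal{A},\mu,\alpha)$ with $\widetilde{as}(x,y,z)+(-1)^{|x||y|}\widetilde{as}(y,x,z)=0$ and $\widetilde{as}(x,y,z)+(-1)^{|y||z|}\widetilde{as}(x,z,y)=0$ for all homogeneous $x,y,z$; it is multiplicative if $\alpha\circ\mu=\mu\circ(\alpha\otimes\alpha)$. *)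

(* Defs.v *)
From mathcomp Require Import all_boot all_algebra.
Set Implicit Arguments. Unset Strict Implicit. Unset Printing Implicit Defensive.
Import GRing.Theory.
Local Open Scope ring_scope.

(* A Z_2-graded vector space A = A_0 (+) A_1 over K is modelled as the
   product A0 * A1 of two K-vector spaces (lmodTypes); an element x is
   homogeneous of parity b (false = 0, true = 1) when its component in the
   other summand vanishes. *)
Definition homog (K : fieldType) (A0 A1 : lmodType K) (b : bool) (x : A0 * A1) : Prop :=
  if b then x.1 = 0 else x.2 = 0.

Section Defs.
Variables (K : fieldType) (A0 A1 : lmodType K).
Local Notation A := (A0 * A1)%type.

Definition is_bilinear (mu : A -> A -> A) : Prop :=
  (forall (a : K) x y z, mu (a *: x + y) z = a *: mu x z + mu y z) /\
  (forall (a : K) x y z, mu x (a *: y + z) = a *: mu x y + mu x z).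

Definition is_linear_map (f : A -> A) : Prop :=
  forall (a : K) x y, f (a *: x + y) = a *: f x + f y.

Definition even_bilinear (mu : A -> A -> A) : Prop :=
  is_bilinear mu /\
  forall (i j : bool) x y, homog i x -> homog j y -> homog (i (+) j) (mu x y).

Definition even_linear (f : A -> A) : Prop :=
  is_linear_map f /\ forall (i : bool) x, homog i x -> homog i (f x).

Definition ssign (i j : bool) : K := (-1) ^+ (i && j).

Definition hom_assoc (mu : A -> A -> A) (alpha : A -> A) (x y z : A) : A :=
  mu (mu x y) (alpha z) - mu (alpha x) (mu y z).

Definition HomAlternativeSuperalgebra (mu : A -> A -> A) (alpha : A -> A) : Prop :=
  [/\ even_bilinear mu, even_linear alpha &
   forall (i j k : bool) x y z, homog i x -> homog j y -> homog k z ->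
     hom_assoc mu alpha x y z + ssign i j *: hom_assoc mu alpha y x z = 0 /\
     hom_assoc mu alpha x y z + ssign j k *: hom_assoc mu alpha x z y = 0].

Definition multiplicative (mu : A -> A -> A) (alpha : A -> A) : Prop :=
  forall x y, alpha (mu x y) = mu (alpha x) (alpha y).

Definition derived_mul (mu : A -> A -> A) (alpha : A -> A) (n : nat) : A -> A -> A :=
  fun x y => iter (2 ^ n - 1) alpha (mu x y).

Definition derived_twist (alpha : A -> A) (n : nat) : A -> A :=
  iter (2 ^ n) alpha.

End Defs.

(* Main.v *)
Require Import Defs.
From mathcomp Require Import all_boot all_algebra.
Set Implicit Arguments.
Local Open Scope ring_scope.
Module Helpers.
Import GRing.Theory.
Section H.
Variables (K : fieldType) (A0 A1 : lmodType K).
Local Notation A := (A0 * A1)%type.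

Lemma lin0 (f : A -> A) : is_linear_map f -> f 0 = 0.
Proof.
move=> hf; have := hf (-1) 0 0.
by rewrite scaler0 addr0 scaleN1r addNr.
Qed.

Lemma linD (f : A -> A) : is_linear_map f -> forall x y, f (x + y) = f x + f y.
Proof. by move=> hf x y; have := hf 1 x y; rewrite !scale1r. Qed.

Lemma linZ (f : A -> A) : is_linear_map f -> forall a x, f (a *: x) = a *: f x.
Proof. by move=> hf a x; have := hf a x 0; rewrite !addr0 (lin0 (f:=f) hf) addr0. Qed.

Lemma linB (f : A -> A) : is_linear_map f -> forall x y, f (x - y) = f x - f y.
Proof.
move=> hf x y; rewrite (linD (f:=f) hf) -scaleN1r (linZ (f:=f) hf) scaleN1r //.
Qed.

Lemma iter_lin (f : A -> A) k : is_linear_map f -> is_linear_map (iter k f).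
Proof.
move=> hf; elim: k => [|k IH] a x y //=.
by rewrite IH hf.
Qed.

Lemma iter_homog (f : A -> A) k : (forall (i : bool) x, homog i x -> homog i (f x)) ->
  forall (i : bool) x, homog i x -> homog i (iter k f x).
Proof. by move=> hf i x hx; elim: k => [|k IH] //=; apply: hf. Qed.

Lemma iter_mult (mu : A -> A -> A) (f : A -> A) k : Defs.multiplicative mu f ->
  forall x y, iter k f (mu x y) = mu (iter k f x) (iter k f y).
Proof. by move=> hm x y; elim: k => [|k IH] //=; rewrite IH hm. Qed.
End H.
End Helpers.
Import Helpers.

Theorem mainTheorem12 (K : closedFieldType) (hK : [pchar K] =i pred0)
  (A0 A1 : lmodType K) (mu : A0 * A1 -> A0 * A1 -> A0 * A1) (alpha : A0 * A1 -> A0 * A1) :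
  HomAlternativeSuperalgebra mu alpha -> multiplicative mu alpha ->
  forall n : nat,
    HomAlternativeSuperalgebra (derived_mul mu alpha n) (derived_twist alpha n) /\
    multiplicative (derived_mul mu alpha n) (derived_twist alpha n).
Proof.
Import GRing.Theory.
move=> [[[bl br] hmu] [la ha] halt] hm n.
set m := (2 ^ n - 1)%N.
have hN : (2 ^ n = m.+1)%N by rewrite /m subn1 prednK // expn_gt0.
have lm := iter_lin (f:=alpha) m la.
have key : forall x y z, hom_assoc (derived_mul mu alpha n) (derived_twist alpha n) x y z
   = iter m alpha (hom_assoc mu alpha (iter m alpha x) (iter m alpha y) (iter m alpha z)).
  move=> x y z; rewrite /hom_assoc /derived_mul /derived_twist hN -/m.
  rewrite subSS subn0 (linB (f:=iter m alpha) lm) !(iter_mult (mu:=mu) (f:=alpha) m hm) //=.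
split; last first.
  move=> x y; rewrite /derived_mul /derived_twist hN subSS subn0 /=.
  rewrite !(iter_mult (mu:=mu) (f:=alpha) _ hm).
  by rewrite hm -!iterSr !iterS.
split.
- split; first split.
  + by move=> a x y z; rewrite /derived_mul bl lm.
  + by move=> a x y z; rewrite /derived_mul br lm.
  + by move=> i j x y hx hy; rewrite /derived_mul; apply: iter_homog => //; apply: hmu.
- split; first exact: iter_lin.
  exact: iter_homog.
- move=> i j k x y z hx hy hz; rewrite !key.
  have [h1 h2] := halt i j k _ _ _ (@iter_homog _ _ _ alpha m ha _ _ hx) (@iter_homog _ _ _ alpha m ha _ _ hy) (@iter_homog _ _ _ alpha m ha _ _ hz).
  by rewrite -!(linZ (f:=iter m alpha) lm) -!(linD (f:=iter m alpha) lm) h1 h2 !(lin0 (f:=iter m alpha) lm).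
Qed.
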